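(* Let $\beta\subset\mathcal B$ be such that the $\beta$-state $\Sigma_\beta$ is not contradictory. If $\Sigma_\beta$ is solvable, then $C_\beta^M$ is an affine space of dimension \[\dim C_\beta^M=\#\{\text{relevant pairs that are vertices of }\Sigma_\beta\}-\#\{\text{relevant triples that are vertices of }\Sigma_\beta\}.\]
   Context: Let $Q$ be a quiver with finite $Q_0,Q_1$, $M$ a finite-dimensional complex representation with ordered basis $\mathcal B=\bigcup_p\mathcal B_p$ (bases $\mathcal B_p$ of $M_p$, total order on $\mathcal B$); $M_v(i)=\sum_j\mu_{v,i,j}j$ for $v:p\to q$, $i\in\mathcal B_p$; coefficient quiver $\Gamma$ with vertices $\mathcal B$ and arrows $(v,i,j)$ with $\mu_{v,i,j}\ne0$, natural map $F:\Gamma\to Q$. Schubert cells: identify $M$ with $\mathbb C^d$ via $\mathcal B$ and subrepresentations $N$ with $\bigoplus_pN_p$. For $|\beta|=e$, $\Delta_\beta(V)$ is the Plücker coordinate (minor with rows $\beta$ of a matrix whose columns span $V$); $\beta\le\beta'$ iff the $l$-th smallest element of $\beta$ is $\le$ that of $\beta'$ for all $l$; $C_\beta(d)=\{V:\Delta_\beta(V)\ne0,\ \Delta_{\beta'}(V)=0\ \forall\beta'>\beta\}$; $C_\beta^M$ is the variety of subrepresentations of $M$ whose underlying subspace lies in $C_\beta(d)$. Schubert system: $E(v,t,s)=\sum_{(v,s',t')\in\Gamma_1}\mu_{v,s',t'}w_{t,t'}w_{s',s}-\sum_{(v,s',t)\in\Gamma_1}\mu_{v,s',t}w_{s',s}$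 for $v:p\to q$, $s\in F^{-1}(p)$, $t\in F^{-1}(q)$. Relevant pairs $\mathrm{Rel}^2=\{(i,j):F(i)=F(j),i\le j\}$; relevant triples $\mathrm{Rel}^3$ = such $(v,t,s)$ with some $(v,s',t')\in\Gamma_1$, $s\ge s'$, $t\le t'$. $E(v,t,s)$ is a polynomial in $w_{i,j}$, $(i,j)\in\mathrm{Rel}^2$ (other variables set to $0$). $\Sigma$: graph on $\mathrm{Rel}^2\sqcup\mathrm{Rel}^3$, edge $\{(i,j),(v,t,s)\}$ iff $w_{i,j}$ occurs in $E(v,t,s)$; links $\lambda=((v,t,s),S)$ whenever $\prod_{(i,j)\in S}w_{i,j}$ occurs in $E(v,t,s)$ with nonzero coefficient $\mu_\lambda$. A partial evaluation is a partial function $\mathrm{ev}:\mathrm{Rel}^2\dashrightarrow\mathbb C$ such that for each triple $(v,t,s)$ and neighbour $(k,l)$: if all other neighbours are in the domain then so is $(k,l)$ and $\sum_{\lambda=((v,t,s),S)}\mu_\lambda\prod_S\mathrm{ev}(i,j)=0$. $f_\beta(i,j)=1$ if $i=j\in\beta$, $0$ if $i\in\beta,i\ne j$, $0$ if $j\notin\beta$, undefined otherwise. $\Sigma_\beta$ is contradictory if no partial evaluation extends $f_\beta$; otherwise $\mathrm{ev}_\beta$ is the unique minimal one (w.r.t. extension). $\beta$-state: for $\lambda=((v,t,s),S)$, $\mu_{\beta,\lambda}=\sum\mu_{\lambda'}\prod_{(i,j)\in S'\cap\mathrm{dom}\,\mathrm{ev}_\beta}\mathrm{ev}_\beta(i,j)$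 over links $\lambda'=((v,t,s),S')$ of $\Sigma$ with $S'\setminus\mathrm{dom}\,\mathrm{ev}_\beta=S$; $\Sigma_\beta$ has links the $\lambda$ with $\mu_{\beta,\lambda}\ne0$ (weight $\mu_{\beta,\lambda}$), vertices the relevant pairs outside $\mathrm{dom}\,\mathrm{ev}_\beta$ and the triples that are tips of its links, edges the edges $\{\tau,\pi\}$ of $\Sigma$ with $\pi\in S$ for a link $(\tau,S)$ of $\Sigma_\beta$. Systems: a system is a bipartite graph whose vertices are coloured ''pairs'' and ''triples'', with a set of links $(\tau,S)$ ($\tau$ a triple, $S$ a set of pairs adjacent to $\tau$; $S$ may be empty) with nonzero weights; $\Sigma_\beta$ is a system. An edge $\{\tau,\pi\}$ is simply linked if $(\tau,\{\pi\})$ is a link and $\{\tau,\pi\}$ is a leg (i.e. $\pi\in S$) of no other link $(\tau,S)$. A solution is an orientation of all edges such that (S1) every triple has exactly one edge oriented away from it, and this edge is simply linked; (S2) every pair has at most one edge oriented towards it; (S3) there are no oriented cycles. The system is solvable if it has a solution. *)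

(* Defs.v *)
From HB Require Import structures.
From mathcomp Require Import all_boot all_order all_algebra.
From mathcomp Require Import reals.
From mathcomp Require Export complex.
Set Implicit Arguments. Unset Strict Implicit. Unset Printing Implicit Defensive.
Import Order.TTheory GRing.Theory Num.Theory.
Local Open Scope ring_scope.

Inductive polyfun (C : fieldType) (I : finType) : ((I -> C) -> C) -> Prop :=
 | pf_const (c : C) : polyfun (fun _ => c)
 | pf_var (i : I) : polyfun (fun x => x i)
 | pf_add f g : polyfun f -> polyfun g -> polyfun (fun x => f x + g x)
 | pf_mul f g : polyfun f -> polyfun g -> polyfun (fun x => f x * g x)
 | pf_ext f g : polyfun f -> (forall x, f x = g x) -> polyfun g.

Section Schubert.
Variables (C : fieldType) (Q0 Q1 : finType) (src tgt : Q1 -> Q0).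
(* The ordered basis B is identified with 'I_d (with its natural order);
   F i is the vertex p with i in B_p; M_v(i) = sum_j mu v i j * j. *)
Variables (d : nat) (F : 'I_d -> Q0) (mu : Q1 -> 'I_d -> 'I_d -> C).

Definition pairT := ('I_d * 'I_d)%type.
(* a triple (v,t,s) is encoded as ((v,t),s) *)
Definition tripleT := (Q1 * 'I_d * 'I_d)%type.

Definition Gamma1 (v : Q1) (i j : 'I_d) : bool :=
  [&& F i == src v, F j == tgt v & mu v i j != 0].

Definition mu_eff (v : Q1) (i j : 'I_d) : C :=
  if (F i == src v) && (F j == tgt v) then mu v i j else 0.

Definition rel2 (p : pairT) : bool := (F p.1 == F p.2) && (p.1 <= p.2)%N.

Definition rel3 (tau : tripleT) : bool :=
  let: (v, t, s) := tau in
  [&& F s == src v, F t == tgt v &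
      [exists s' : 'I_d, exists t' : 'I_d,
          [&& Gamma1 v s' t', (s' <= s)%N & (t <= t')%N]]].

(* monomials in the variables w_{i,j} (exponents <= 2 suffice: E has degree <= 2) *)
Definition mono := {ffun pairT -> 'I_3}.
Definition mon1 (p : pairT) : mono := [ffun x => inord (x == p)].
Definition mon2 (p q : pairT) : mono := [ffun x => inord ((x == p) + (x == q))%N].

(* coefficient of the monomial m in E(v,t,s); variables w_{i,j} with (i,j)
   not relevant are set to 0 *)
Definition coefE (tau : tripleT) (m : mono) : C :=
  let: (v, t, s) := tau in
  \sum_(s' : 'I_d) \sum_(t' : 'I_d)
     (if [&& Gamma1 v s' t', rel2 (t, t'), rel2 (s', s) & m == mon2 (t, t') (s', s)]
      then mu v s' t' else 0)
  - \sum_(s' : 'I_d)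
     (if [&& Gamma1 v s' t, rel2 (s', s) & m == mon1 (s', s)] then mu v s' t else 0).

(* links of Sigma: (tau, S) with S the monomial prod_{S} w, nonzero coefficient *)
Definition link (tau : tripleT) (m : mono) : bool := rel3 tau && (coefE tau m != 0).

Definition edge (tau : tripleT) (p : pairT) : bool :=
  [&& rel3 tau, rel2 p & [exists m, link tau m && (0 < m p)%N]].

Definition pevT := pairT -> option C.

Definition evalE (ev : pevT) (tau : tripleT) : C :=
  \sum_(m : mono) coefE tau m * \prod_(p : pairT) (odflt 0 (ev p)) ^+ m p.

Definition partial_eval (ev : pevT) : Prop :=
  (forall p, isSome (ev p) -> rel2 p) /\
  (forall tau p, rel3 tau -> edge tau p ->
     (forall p', edge tau p' -> p' != p -> isSome (ev p')) ->
     isSome (ev p) /\ evalE ev tau = 0).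

Definition f_beta (beta : {set 'I_d}) : pevT := fun p =>
  if ~~ rel2 p then None
  else if p.1 \in beta then Some (if p.1 == p.2 then 1 else 0)
  else if p.2 \notin beta then Some 0
  else None.

Definition extends (ev1 ev2 : pevT) : Prop :=
  forall p, isSome (ev1 p) -> ev2 p = ev1 p.

Definition contradictory (beta : {set 'I_d}) : Prop :=
  ~ exists ev, partial_eval ev /\ extends (f_beta beta) ev.

(* ev is the unique minimal (= least, the poset having finite height)
   partial evaluation extending f_beta *)
Definition is_ev_beta (beta : {set 'I_d}) (ev : pevT) : Prop :=
  [/\ partial_eval ev, extends (f_beta beta) ev &
      forall ev', partial_eval ev' -> extends (f_beta beta) ev' -> extends ev ev'].

Definition muB (ev : pevT) (tau : tripleT) (S : mono) : C :=
  \sum_(m : mono | link tau m &&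
          [forall p, if isSome (ev p) then (S p == 0 :> nat) else (m p == S p)])
     coefE tau m * \prod_(p : pairT | isSome (ev p)) (odflt 0 (ev p)) ^+ m p.

Definition blink (ev : pevT) (tau : tripleT) (S : mono) : bool :=
  rel3 tau && (muB ev tau S != 0).

Definition bpair (ev : pevT) (p : pairT) : bool := rel2 p && ~~ isSome (ev p).
Definition btriple (ev : pevT) (tau : tripleT) : bool := [exists S, blink ev tau S].
Definition bedge (ev : pevT) (tau : tripleT) (p : pairT) : bool :=
  edge tau p && [exists S, blink ev tau S && (0 < S p)%N].

Definition simply_linked (ev : pevT) (tau : tripleT) (p : pairT) : bool :=
  blink ev tau (mon1 p) &&
  [forall S, (blink ev tau S && (0 < S p)%N) ==> (S == mon1 p)].

(* orientation: out tau p = true iff the edge {tau,p} is oriented tau -> p *)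
Definition arc (ev : pevT) (out : tripleT -> pairT -> bool)
    (x y : (pairT + tripleT)%type) : bool :=
  match x, y with
  | inr tau, inl p => bedge ev tau p && out tau p
  | inl p, inr tau => bedge ev tau p && ~~ out tau p
  | _, _ => false
  end.

Definition is_solution (ev : pevT) (out : tripleT -> pairT -> bool) : Prop :=
  [/\
      (forall tau, btriple ev tau ->
         exists p, [/\ bedge ev tau p, out tau p, simply_linked ev tau p &
                      forall p', bedge ev tau p' -> out tau p' -> p' = p]),
      (forall p tau1 tau2, bedge ev tau1 p -> out tau1 p ->
                           bedge ev tau2 p -> out tau2 p -> tau1 = tau2) &
      (forall x y, arc ev out x y -> ~~ connect (arc ev out) y x)].

Definition solvable (ev : pevT) : Prop := exists out, is_solution ev out.

(* Pluecker coordinate: rows of X : 'M_(e,d) span V (row convention);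
   minor on the columns in b (listed increasingly) *)
Definition Pl (e : nat) (X : 'M[C]_(e, d)) (b : {set 'I_d}) : C :=
  \det (\matrix_(k < e, l < e) oapp (X k) 0 (onth (enum b) l)).

Definition bnth (b : {set 'I_d}) (l : nat) : nat :=
  nth 0%N (map (@nat_of_ord d) (enum b)) l.

Definition ble (b b' : {set 'I_d}) : bool :=
  (#|b| == #|b'|) && [forall l : 'I_#|b|, bnth b l <= bnth b' l]%N.
Definition blt (b b' : {set 'I_d}) : bool := ble b b' && (b != b').

Definition projM (p : Q0) : 'M[C]_d := \matrix_(i, j) ((i == j) && (F i == p))%:R.
Definition actM (v : Q1) : 'M[C]_d := \matrix_(i, j) mu_eff v i j.

Definition subrep (e : nat) (X : 'M[C]_(e, d)) : Prop :=
  (forall p, (X *m projM p <= X)%MS) /\ (forall v, (X *m actM v <= X)%MS).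

(* X (up to row equivalence) is a point of C_beta^M *)
Definition cellM (b : {set 'I_d}) (X : 'M[C]_(#|b|, d)) : Prop :=
  [/\ Pl X b != 0, (forall b', blt b b' -> Pl X b' = 0) & subrep X].

(* affine coordinates Delta_{b'}/Delta_b on the chart {Delta_b <> 0} *)
Definition ratios (b : {set 'I_d}) (X : 'M[C]_(#|b|, d)) : {set 'I_d} -> C :=
  fun b' => if #|b'| == #|b| then Pl X b' / Pl X b else 0.

(* S (a row-equivalence-closed set of points of the chart {Delta_b <> 0} of the
   Grassmannian) is isomorphic, as a variety, to affine n-space *)
Definition affine_of_dim (b : {set 'I_d}) (S : 'M[C]_(#|b|, d) -> Prop) (n : nat) : Prop :=
  exists (phi : ('I_n -> C) -> 'M[C]_(#|b|, d)) (psi : 'I_n -> ({set 'I_d} -> C) -> C),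
    [/\ forall i j, polyfun (fun x => phi x i j),
        forall k, polyfun (psi k),
        forall x, S (phi x),
        forall x k, psi k (ratios (phi x)) = x k &
        forall X, S X -> (phi (fun k => psi k (ratios X)) == X)%MS].

End Schubert.

(* Main.v *)
Require Import Defs.
From HB Require Import structures.
From mathcomp Require Import all_boot all_order all_algebra.
From mathcomp Require Import reals complex.
From mathcomp Require Import perm.
From mathcomp Require Import ring.
Set Implicit Arguments. Unset Strict Implicit. Unset Printing Implicit Defensive.
Import GRing.Theory.

Module P1.
Local Open Scope ring_scope.

Section PF.
Variables (C : fieldType) (I : finType).

Lemma pf_sum (J : Type) (r : seq J) (P : pred J) (f : J -> (I -> C) -> C) :
  (forall j, polyfun (f j)) -> polyfun (fun x => \sum_(j <- r | P j) f j x).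
Proof.
move=> H; elim: r => [|j r IH].
  by apply: (pf_ext (pf_const _ 0)) => x; rewrite big_nil.
case Pj: (P j).
  by apply: (pf_ext (pf_add (H j) IH)) => x; rewrite big_cons Pj.
by apply: (pf_ext IH) => x; rewrite big_cons Pj.
Qed.

Lemma pf_prod (J : Type) (r : seq J) (P : pred J) (f : J -> (I -> C) -> C) :
  (forall j, polyfun (f j)) -> polyfun (fun x => \prod_(j <- r | P j) f j x).
Proof.
move=> H; elim: r => [|j r IH].
  by apply: (pf_ext (pf_const _ 1)) => x; rewrite big_nil.
case Pj: (P j).
  by apply: (pf_ext (pf_mul (H j) IH)) => x; rewrite big_cons Pj.
by apply: (pf_ext IH) => x; rewrite big_cons Pj.
Qed.

Lemma pf_exp f n : polyfun f -> polyfun (fun x : I -> C => f x ^+ n).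
Proof.
move=> H; elim: n => [|n IH].
  by apply: (pf_ext (pf_const _ 1)) => x; rewrite expr0.
by apply: (pf_ext (pf_mul H IH)) => x; rewrite exprS.
Qed.

Lemma pf_scale (c : C) f : polyfun f -> polyfun (fun x : I -> C => c * f x).
Proof. by move=> H; apply: (pf_mul (pf_const _ c) H). Qed.

End PF.

Section Main.
Variables (C : fieldType) (Q0 Q1 : finType) (src tgt : Q1 -> Q0).
Variables (d : nat) (F : 'I_d -> Q0) (mu : Q1 -> 'I_d -> 'I_d -> C).

Local Notation coefE := (Defs.coefE src tgt F mu).
Local Notation rel2 := (Defs.rel2 F).
Local Notation rel3 := (Defs.rel3 src tgt F mu).
Local Notation Gamma1 := (Defs.Gamma1 src tgt F mu).
Local Notation mu_eff := (Defs.mu_eff src tgt F mu).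

Definition evalW (W : pairT d -> C) (tau : tripleT Q1 d) : C :=
  \sum_(m : mono d) coefE tau m * \prod_(p : pairT d) W p ^+ m p.

Lemma mon1E (a p : pairT d) : (mon1 a p : nat) = (p == a).
Proof. by rewrite ffunE inordK //; case: (p == a). Qed.

Lemma mon2E (a b p : pairT d) : (mon2 a b p : nat) = ((p == a) + (p == b))%N.
Proof. by rewrite ffunE inordK //; case: (p == a); case: (p == b). Qed.

Lemma prod_pow1 (W : pairT d -> C) a :
  \prod_(p : pairT d) W p ^+ (p == a) = W a.
Proof.
rewrite (bigD1 a) //= eqxx expr1 big1 ?mulr1 // => p /negbTE ->.
by rewrite expr0.
Qed.

Lemma prod_mon1 (W : pairT d -> C) a :
  \prod_(p : pairT d) W p ^+ mon1 a p = W a.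
Proof. by rewrite -[RHS](prod_pow1 W a); apply: eq_bigr => p _; rewrite mon1E. Qed.

Lemma prod_mon2 (W : pairT d -> C) a b :
  \prod_(p : pairT d) W p ^+ mon2 a b p = W a * W b.
Proof.
rewrite -(prod_pow1 W a) -(prod_pow1 W b) -big_split /=.
by apply: eq_bigr => p _; rewrite mon2E exprD.
Qed.

Lemma sum_pick (m0 : mono d) (c : bool) (a : C) (G : mono d -> C) :
  \sum_(m : mono d) (if c && (m == m0) then a else 0) * G m =
  if c then a * G m0 else 0.
Proof.
case: c => /=; last by rewrite big1 // => m _; rewrite mul0r.
rewrite (bigD1 m0) //= eqxx big1 ?addr0 // => m /negbTE ->.
by rewrite mul0r.
Qed.

Lemma evalW_explicit (W : pairT d -> C) v t s :
  evalW W (v, t, s) =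
  \sum_(s' : 'I_d) \sum_(t' : 'I_d)
     (if [&& Gamma1 v s' t', rel2 (t, t') & rel2 (s', s)]
      then mu v s' t' * (W (t, t') * W (s', s)) else 0)
  - \sum_(s' : 'I_d)
     (if Gamma1 v s' t && rel2 (s', s) then mu v s' t * W (s', s) else 0).
Proof.
rewrite /evalW /Defs.coefE; cbv beta iota.
under eq_bigr => m _ do rewrite mulrBl.
rewrite sumrB; congr (_ - _).
  under eq_bigr do rewrite mulr_suml.
  rewrite exchange_big /=; apply: eq_bigr => s' _.
  under eq_bigr do rewrite mulr_suml.
  rewrite exchange_big /=; apply: eq_bigr => t' _.
  under eq_bigr => m _.
    have -> : [&& Gamma1 v s' t', rel2 (t, t'), rel2 (s', s)
                 & m == mon2 (t, t') (s', s)] =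
       [&& Gamma1 v s' t', rel2 (t, t') & rel2 (s', s)] && (m == mon2 (t, t') (s', s)).
      by rewrite !andbA.
    over.
  by rewrite sum_pick prod_mon2.
under eq_bigr do rewrite mulr_suml.
rewrite exchange_big /=; apply: eq_bigr => s' _.
under eq_bigr => m _.
  have -> : [&& Gamma1 v s' t, rel2 (s', s) & m == mon1 (s', s)] =
     (Gamma1 v s' t && rel2 (s', s)) && (m == mon1 (s', s)).
    by rewrite !andbA.
  over.
by rewrite sum_pick prod_mon1.
Qed.


Lemma sum_pick2 (T : finType) (m0 : T) (c : bool) (G : T -> C) :
  \sum_(m : T) (if c && (m == m0) then G m else 0) = if c then G m0 else 0.
Proof.
case: c => /=; last by rewrite big1.
by rewrite (bigD1 m0) //= eqxx big1 ?addr0 // => m /negbTE ->.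
Qed.

Lemma sum_nz (T : finType) (P : pred T) (f : T -> C) :
  \sum_(i | P i) f i != 0 -> exists i, P i && (f i != 0).
Proof.
case: (pickP (fun i => P i && (f i != 0))) => [i Hi _|H]; first by exists i.
rewrite big1 ?eqxx // => i Pi; move: (H i); rewrite Pi /=.
by move/negbFE/eqP.
Qed.

Lemma coefE_nonrel3 tau m : ~~ rel3 tau -> coefE tau m = 0.
Proof.
case: tau => [[v t] s] /= Hn; rewrite /Defs.coefE; cbv beta iota.
rewrite [X in X - _]big1 ?sub0r ?big1 ?oppr0 // => s' _.
  case: ifP => // /and3P [/and3P [Hs Ht Hm] /andP [/eqP Hss Hle'] _].
  case/negP: Hn; rewrite /Defs.rel3 -Hss Hs Ht /=.
  by apply/existsP; exists s'; apply/existsP; exists t; rewrite /Defs.Gamma1 Hs Ht Hm Hle' leqnn.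
rewrite big1 // => t' _.
case: ifP => // /and4P [/and3P [Hs Ht Hm] /andP [/eqP Htt Hle] /andP [/eqP Hss Hle'] _].
case/negP: Hn; rewrite /Defs.rel3 -Hss Hs Htt Ht /=.
by apply/existsP; exists s'; apply/existsP; exists t'; rewrite /Defs.Gamma1 Hs Ht Hm Hle Hle'.
Qed.

Lemma coefE_nz_rel2 tau m q : coefE tau m != 0 -> (0 < m q)%N -> rel2 q.
Proof.
case: tau => [[v t] s]; rewrite /Defs.coefE; cbv beta iota => Hnz Hq.
have [H1|H2] : \sum_(s' < d) \sum_(t' < d)
     (if [&& Gamma1 v s' t', rel2 (t, t'), rel2 (s', s) & m == mon2 (t, t') (s', s)]
      then mu v s' t' else 0) != 0 \/
  \sum_(s' < d) (if [&& Gamma1 v s' t, rel2 (s', s) & m == mon1 (s', s)]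
      then mu v s' t else 0) != 0.
  case: (boolP (_ != 0)) => H; [by left | right].
  by move: Hnz; move/eqP: (negbNE H) => ->; rewrite sub0r oppr_eq0.
- case: (sum_nz H1) => s' /= /sum_nz [t' /=].
  case: ifP => [/and4P [_ Ha Hb /eqP Hm] _|]; last by rewrite eqxx.
  move: Hq; rewrite Hm mon2E.
  by case: eqP => [->|_]; case: eqP => [->|_].
- case: (sum_nz H2) => s' /=.
  case: ifP => [/and3P [_ Ha /eqP Hm] _|]; last by rewrite eqxx.
  by move: Hq; rewrite Hm mon1E; case: eqP => [->|_].
Qed.


Variable ev : pevT C d.
Local Notation muB := (Defs.muB src tgt F mu ev).
Local Notation link := (Defs.link src tgt F mu).

Definition restr (m : mono d) : mono d :=
  [ffun p => if isSome (ev p) then ord0 else m p].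

Lemma restr_cond (m S : mono d) :
  [forall p, if isSome (ev p) then (S p == 0 :> nat) else (m p == S p)] =
  (S == restr m).
Proof.
apply/forallP/eqP.
  move=> H; apply/ffunP => p; rewrite ffunE; move: (H p).
  by case: (isSome (ev p)) => /eqP h; [apply: val_inj | rewrite h].
by move=> -> p; rewrite ffunE; case: (isSome (ev p)).
Qed.

Lemma evalW_group (W : pairT d -> C) tau :
  rel3 tau -> (forall p c, ev p = Some c -> W p = c) ->
  evalW W tau =
  \sum_(S : mono d) muB tau S * \prod_(p | ~~ isSome (ev p)) W p ^+ S p.
Proof.
move=> H3 HW; rewrite /Defs.muB.
under [RHS]eq_bigr => S _ do rewrite big_mkcond mulr_suml /=.
rewrite exchange_big /=; apply: eq_bigr => m _.
under eq_bigr => S _ do rewrite restr_cond.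
rewrite sum_pick.
rewrite /Defs.link H3 /=.
case: (boolP (coefE tau m != 0)) => Hm; last by move/eqP: (negbNE Hm) => ->; rewrite mul0r.
rewrite -mulrA; congr (_ * _).
rewrite (bigID (fun p => isSome (ev p))) /=; congr (_ * _).
  apply: eq_bigr => p; case E: (ev p) => [c|] //= _.
  by rewrite (HW _ _ E).
by apply: eq_bigr => p Hp; rewrite ffunE (negbTE Hp).
Qed.


Local Notation blink := (Defs.blink src tgt F mu ev).
Local Notation bedge := (Defs.bedge src tgt F mu ev).
Local Notation btriple := (Defs.btriple src tgt F mu ev).
Local Notation edge := (Defs.edge src tgt F mu).

Lemma blink_rel3 tau S : blink tau S -> rel3 tau.
Proof. by case/andP. Qed.

Lemma btriple_rel3 tau : btriple tau -> rel3 tau.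
Proof. by case/existsP => S /blink_rel3. Qed.

Lemma blink_edge tau S q : blink tau S -> (0 < S q)%N ->
  edge tau q && ~~ isSome (ev q).
Proof.
case/andP => H3 HmuB Hq.
case: (sum_nz HmuB) => m /andP [/andP [Hl /forallP Hc] _].
have Hm := Hc q.
have Hu : ~~ isSome (ev q).
  by move: Hm; case: (isSome (ev q)) => // /eqP h; move: Hq; rewrite h.
rewrite Hu andbT /Defs.edge H3 /=.
move: Hm; rewrite (negbTE Hu) => /eqP Hmq.
move: (Hl); case/andP => _ Hnz.
rewrite (coefE_nz_rel2 Hnz (_ : (0 < m q)%N)) ?Hmq //=.
by apply/existsP; exists m; rewrite Hl Hmq.
Qed.

Lemma blink_bedge tau S q : blink tau S -> (0 < S q)%N ->
  bedge tau q && ~~ isSome (ev q).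
Proof.
move=> Hb Hq; case/andP: (blink_edge Hb Hq) => He Hu.
by rewrite Hu andbT /Defs.bedge He /=; apply/existsP; exists S; rewrite Hb Hq.
Qed.

Lemma bedge_undef tau q : bedge tau q -> ev q = None.
Proof.
case/andP => _ /existsP [S /andP [Hb Hq]].
by case/andP: (blink_bedge Hb Hq); case: (ev q).
Qed.

Lemma bedge_rel2 tau q : bedge tau q -> rel2 q.
Proof. by case/andP => /and3P []. Qed.

Lemma prod_undef_mon1 (W : pairT d -> C) p : ev p = None ->
  \prod_(q | ~~ isSome (ev q)) W q ^+ mon1 p q = W p.
Proof.
move=> Hp; rewrite (bigD1 p) /= ?Hp // mon1E eqxx expr1 big1 ?mulr1 //.
by move=> q /andP [_ Hq]; rewrite mon1E (negbTE Hq) expr0.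
Qed.

Definition restsum (W : pairT d -> C) tau p :=
  \sum_(S : mono d | S != mon1 p) muB tau S *
     \prod_(q | ~~ isSome (ev q)) W q ^+ S q.

Lemma evalW_split (W : pairT d -> C) tau p :
  rel3 tau -> (forall q c, ev q = Some c -> W q = c) -> ev p = None ->
  evalW W tau = muB tau (mon1 p) * W p + restsum W tau p.
Proof.
move=> H3 HW Hp; rewrite (evalW_group H3 HW) (bigD1 (mon1 p)) //=.
by rewrite prod_undef_mon1.
Qed.

Variable out : tripleT Q1 d -> pairT d -> bool.
Hypothesis Hpe : partial_eval src tgt F mu ev.
Hypothesis Hsol : is_solution src tgt F mu ev out.

Local Notation arcr := (Defs.arc src tgt F mu ev out).

Lemma S1 tau : btriple tau ->
  exists p, [/\ bedge tau p, out tau p, simply_linked src tgt F mu ev tau p &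
             forall p', bedge tau p' -> out tau p' -> p' = p].
Proof. by case: Hsol => H _ _; apply: H. Qed.

Lemma S1u tau p p' : btriple tau -> bedge tau p -> out tau p ->
  bedge tau p' -> out tau p' -> p' = p.
Proof.
move=> Ht Hp Hop Hp' Hop'; case: (S1 Ht) => p0 [_ _ _ Hu].
by rewrite (Hu _ Hp' Hop') (Hu _ Hp Hop).
Qed.

Lemma S2 p tau1 tau2 : bedge tau1 p -> out tau1 p -> bedge tau2 p -> out tau2 p ->
  tau1 = tau2.
Proof. by case: Hsol => _ H _; apply: H. Qed.

Lemma S3 x y : arcr x y -> ~~ connect arcr y x.
Proof. by case: Hsol => _ _ H; apply: H. Qed.

Lemma restsum_local (W W' : pairT d -> C) tau p :
  btriple tau -> bedge tau p -> out tau p ->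
  (forall q, arcr (inl q) (inr tau) -> W q = W' q) ->
  restsum W tau p = restsum W' tau p.
Proof.
move=> Ht Hp Hop HW; apply: eq_bigr => S HS.
case: (boolP (muB tau S == 0)) => [/eqP ->|Hnz]; first by rewrite !mul0r.
have Hb : blink tau S by rewrite /Defs.blink (btriple_rel3 Ht).
congr (_ * _); apply: eq_bigr => q Hq.
case: (posnP (S q)) => [->|Hsq]; first by rewrite !expr0.
congr (_ ^+ _); apply: HW => /=.
case/andP: (blink_bedge Hb Hsq) => Hbq _; rewrite Hbq /=.
apply/negP => Hoq.
have Eq := S1u Ht Hp Hop Hbq Hoq; subst q.
case: (S1 Ht) => p0 [Hp0 Hop0 Hsl _].
have Ep := S1u Ht Hp0 Hop0 Hp Hop; subst p0.
case/andP: Hsl => _ /forallP /(_ S); rewrite Hb Hsq /= => /eqP E.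
by move: HS; rewrite E eqxx.
Qed.


Definition targeted p := [exists tau, [&& btriple tau, bedge tau p & out tau p]].
Definition freep p := bpair F ev p && ~~ targeted p.
Definition FA := [set p | freep p].
Local Notation n := #|FA|.

Definition Top (x : 'I_n -> C) (W : pairT d -> C) (p : pairT d) : C :=
  match ev p with
  | Some c => c
  | None =>
    if ~~ rel2 p then 0 else
    if freep p then oapp x 0 [pick k : 'I_n | enum_val k == p] else
    match [pick tau | [&& btriple tau, bedge tau p & out tau p]] with
    | Some tau => - (muB tau (mon1 p))^-1 * restsum W tau p
    | None => 0
    end
  end.

Lemma Top_ext x (W W' : pairT d -> C) : W =1 W' -> Top x W =1 Top x W'.
Proof.
move=> E p; rewrite /Top; case: (ev p) => // .
case: (rel2 p) => //=; case: (freep p) => //.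
case: pickP => // tau _; congr (_ * _); apply: eq_bigr => S _.
by congr (_ * _); apply: eq_bigr => q _; rewrite E.
Qed.

Definition rank p := #|[set y | connect arcr y (inl p)]|.

Lemma rank_lt q tau p : arcr (inl q) (inr tau) -> arcr (inr tau) (inl p) ->
  (rank q < rank p)%N.
Proof.
move=> H1 H2; apply: proper_card; apply/properP; split.
  apply/subsetP => y; rewrite !inE => Hy.
  apply: (connect_trans Hy); apply: (connect_trans (connect1 H1)).
  exact: connect1.
exists (inl p); first by rewrite inE connect0.
rewrite inE; apply/negP => Hc.
have : connect arcr (inl p) (inr tau) := connect_trans Hc (connect1 H1).
by rewrite (negbTE (S3 H2)).
Qed.

Lemma rank_pos p : (0 < rank p)%N.
Proof. by apply/card_gt0P; exists (inl p); rewrite inE connect0. Qed.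

Lemma Top_local x (W W' : pairT d -> C) p :
  (forall q tau, arcr (inl q) (inr tau) -> arcr (inr tau) (inl p) -> W q = W' q) ->
  Top x W p = Top x W' p.
Proof.
move=> HW; rewrite /Top; case: (ev p) => // .
case: (rel2 p) => //=; case: (freep p) => //.
case: pickP => // tau /and3P [Ht Hp Hop]; congr (_ * _).
apply: restsum_local => // q Hq; apply: (HW q tau Hq) => /=.
by rewrite Hp Hop.
Qed.

Lemma stab x k : forall p, (rank p <= k)%N -> forall W W' : pairT d -> C,
  iter k (Top x) W p = iter k (Top x) W' p.
Proof.
elim: k => [|k IH] p Hr W W'.
  by move: (rank_pos p); rewrite leqNgt in Hr; rewrite (negbTE Hr).
rewrite !iterS; apply: Top_local => q tau H1 H2.
apply: IH; rewrite -ltnS; exact: leq_trans (rank_lt H1 H2) Hr.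
Qed.

Definition Nbig := #|{: (pairT d + tripleT Q1 d)%type}|.

Lemma rank_le p : (rank p <= Nbig)%N.
Proof. exact: max_card. Qed.

Definition Wst (x : 'I_n -> C) : pairT d -> C := iter Nbig (Top x) (fun _ => 0).

Lemma Wst_fix x : Top x (Wst x) =1 Wst x.
Proof.
move=> p; rewrite /Wst -iterS iterSr.
by apply: stab; exact: rank_le.
Qed.

Lemma Wst_uniq x (W : pairT d -> C) : Top x W =1 W -> W =1 Wst x.
Proof.
move=> H.
have E : forall k, iter k (Top x) W =1 W.
  elim=> [|k IH] p //=; rewrite (Top_ext x IH p); exact: H.
move=> p; rewrite -(E Nbig p) /Wst; apply: stab; exact: rank_le.
Qed.


Definition good (W : pairT d -> C) : Prop :=
  [/\ forall p, ~~ rel2 p -> W p = 0,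
      forall p c, ev p = Some c -> W p = c &
      forall tau, rel3 tau -> evalW W tau = 0].

Lemma ev_rel2 p c : ev p = Some c -> rel2 p.
Proof. by case: Hpe => H _ E; apply: H; rewrite E. Qed.

Lemma targetedP p tau : btriple tau -> bedge tau p -> out tau p ->
  [pick tau' | [&& btriple tau', bedge tau p & out tau p]] = Some tau \/ True.
Proof. by right. Qed.

Lemma pick_tau p tau : btriple tau -> bedge tau p -> out tau p ->
  [pick tau' | [&& btriple tau', bedge tau' p & out tau' p]] = Some tau.
Proof.
move=> Ht Hp Hop; case: pickP => [tau' /and3P [_ Hp' Hop']|H].
  by rewrite (S2 Hp' Hop' Hp Hop).
by move: (H tau); rewrite Ht Hp Hop.
Qed.

Lemma fix_good x W : Top x W =1 W -> good W.
Proof.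
move=> H.
have HW : forall p c, ev p = Some c -> W p = c.
  by move=> p c E; rewrite -H /Top E.
split => //.
  move=> p Hr; rewrite -H /Top; case E: (ev p) => [c|]; last by rewrite Hr.
  by move: Hr; rewrite (ev_rel2 E).
move=> tau H3; case: (boolP (btriple tau)) => Ht.
  case: (S1 Ht) => p0 [Hp0 Hop0 Hsl _].
  have Hu := bedge_undef Hp0.
  rewrite (evalW_split H3 HW Hu).
  have -> : W p0 = - (muB tau (mon1 p0))^-1 * restsum W tau p0.
    rewrite -H /Top Hu (bedge_rel2 Hp0) /=.
    have -> : freep p0 = false.
      rewrite /freep; apply/negbTE; rewrite negb_and; apply/orP; right.
      by rewrite negbK; apply/existsP; exists tau; rewrite Ht Hp0 Hop0.
    by rewrite (pick_tau Ht Hp0 Hop0).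
  have Hnz : muB tau (mon1 p0) != 0 by case/andP: Hsl => /andP [].
  by rewrite mulrA mulrN mulfV // mulN1r addNr.
rewrite (evalW_group H3 HW) big1 // => S _.
have -> : muB tau S = 0.
  apply/eqP; apply: contraNT Ht => Hnz.
  by apply/existsP; exists S; rewrite /Defs.blink H3.
by rewrite mul0r.
Qed.

Lemma enum_val_pick (k : 'I_n) :
  [pick k' : 'I_n | enum_val k' == enum_val k] = Some k.
Proof.
case: pickP => [k' /eqP /enum_val_inj -> //|H].
by move: (H k); rewrite eqxx.
Qed.

Lemma good_fix x W : good W -> (forall k, W (enum_val k) = x k) -> Top x W =1 W.
Proof.
case=> H1 H2 H3 Hx p; rewrite /Top.
case E: (ev p) => [c|]; first by rewrite (H2 _ _ E).
case: (boolP (rel2 p)) => Hr /=; last by rewrite H1.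
case: (boolP (freep p)) => Hf.
  have Hp : p \in FA by rewrite inE.
  by rewrite -{1}(enum_rankK_in Hp Hp) enum_val_pick /= -Hx (enum_rankK_in Hp Hp).
case: pickP => [tau /and3P [Ht Hp Hop]|Hn].
  have H3t := btriple_rel3 Ht.
  have := H3 _ H3t; rewrite (evalW_split H3t H2 E) => /eqP.
  rewrite addrC addr_eq0 => /eqP ->.
  have Hnz : muB tau (mon1 p) != 0.
    case: (S1 Ht) => p0 [Hp0 Hop0 Hsl _].
    by rewrite (S1u Ht Hp0 Hop0 Hp Hop); case/andP: Hsl => /andP [].
  by rewrite mulNr mulrN opprK mulrA mulVf // mul1r.
exfalso; move: Hf; rewrite /freep /Defs.bpair Hr E /= negbK.
by case/existsP => tau; rewrite Hn.
Qed.

Lemma Wst_good x : good (Wst x).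
Proof. exact: fix_good (Wst_fix x). Qed.

Lemma Wst_free x k : Wst x (enum_val k) = x k.
Proof.
rewrite -Wst_fix /Top.
have : enum_val k \in FA by apply: enum_valP.
rewrite inE => Hf; move: (Hf) => /andP [/andP [Hr Hu] _].
case E: (ev (enum_val k)) Hu => [c|] // _.
by rewrite Hr Hf enum_val_pick.
Qed.

Lemma good_Wst x W : good W -> (forall k, W (enum_val k) = x k) -> W =1 Wst x.
Proof. by move=> Hg Hx; apply: Wst_uniq; apply: good_fix. Qed.

Lemma Wst_poly p : polyfun (fun x : 'I_n -> C => Wst x p).
Proof.
rewrite /Wst; elim: Nbig p => [|k IH] p /=; first exact: pf_const.
rewrite /Top; case: (ev p) => [c|]; first exact: pf_const.
case: (rel2 p) => /=; last exact: pf_const.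
case: (freep p).
  case: pickP => [k' _|_] /=; [exact: pf_var | exact: pf_const].
case: pickP => [tau _|_]; last exact: pf_const.
apply: pf_scale; apply: pf_sum => S; apply: pf_scale.
by apply: pf_prod => q; apply: pf_exp.
Qed.


Lemma card_FA :
  #|FA| = (#|[set p | bpair F ev p]| - #|[set tau | btriple tau]|)%N.
Proof.
pose E := [set tp : tripleT Q1 d * pairT d |
             [&& btriple tp.1, bedge tp.1 tp.2 & out tp.1 tp.2]].
have E1 : [set tau | btriple tau] = fst @: E.
  apply/setP => tau; rewrite inE; apply/idP/imsetP.
    move=> Ht; case: (S1 Ht) => p0 [Hp0 Hop0 _ _].
    by exists (tau, p0) => //; rewrite inE /= Ht Hp0 Hop0.
  by case=> [[tau' p]]; rewrite inE /= => /and3P [Ht _ _] ->.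
have E2 : [set p | targeted p] = snd @: E.
  apply/setP => p; rewrite inE; apply/idP/imsetP.
    case/existsP => tau /and3P [Ht Hp Hop].
    by exists (tau, p) => //; rewrite inE /= Ht Hp Hop.
  case=> [[tau p']]; rewrite inE /= => /and3P [Ht Hp Hop] ->.
  by apply/existsP; exists tau; rewrite Ht Hp Hop.
have C1 : #|[set tau | btriple tau]| = #|E|.
  rewrite E1 card_in_imset // => [[t1 p1] [t2 p2]]; rewrite !inE /=.
  move=> /and3P [Ht1 Hp1 Ho1] /and3P [Ht2 Hp2 Ho2] Et; subst t2.
  by rewrite (S1u Ht1 Hp1 Ho1 Hp2 Ho2).
have C2 : #|[set p | targeted p]| = #|E|.
  rewrite E2 card_in_imset // => [[t1 p1] [t2 p2]]; rewrite !inE /=.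
  move=> /and3P [Ht1 Hp1 Ho1] /and3P [Ht2 Hp2 Ho2] Ep; subst p2.
  by rewrite (S2 Hp1 Ho1 Hp2 Ho2).
have Hsub : [set p | targeted p] \subset [set p | bpair F ev p].
  apply/subsetP => p; rewrite !inE => /existsP [tau /and3P [_ Hp _]].
  by rewrite /Defs.bpair (bedge_rel2 Hp) (bedge_undef Hp).
have -> : FA = [set p | bpair F ev p] :\: [set p | targeted p].
  by apply/setP => p; rewrite !inE /freep andbC.
by rewrite cardsD (setIidPr Hsub) C1 C2.
Qed.

End Main.

Section Mat.
Variables (C : fieldType) (Q0 Q1 : finType) (src tgt : Q1 -> Q0).
Variables (d : nat) (F : 'I_d -> Q0) (mu : Q1 -> 'I_d -> 'I_d -> C).
Variable beta : {set 'I_d}.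

Local Notation rel2 := (Defs.rel2 F).
Local Notation rel3 := (Defs.rel3 src tgt F mu).
Local Notation Gamma1 := (Defs.Gamma1 src tgt F mu).
Local Notation mu_eff := (Defs.mu_eff src tgt F mu).
Local Notation evalW := (evalW src tgt F mu).
Local Notation e := #|beta|.

Definition mat (W : pairT d -> C) : 'M[C]_(e, d) := \matrix_(k, i) W (i, enum_val k).

Lemma onth_enum_val (b : {set 'I_d}) (l : 'I_#|b|) :
  onth (enum b) l = Some (enum_val l).
Proof. by rewrite onthE (nth_map (enum_default l)) // -cardE ltn_ord. Qed.

Lemma PlM (A : 'M[C]_e) (X : 'M[C]_(e, d)) b :
  Pl (A *m X) b = \det A * Pl X b.
Proof.
rewrite /Pl -det_mulmx; congr (\det _); apply/matrixP => k l; rewrite !mxE.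
under [RHS]eq_bigr do rewrite mxE.
case: (onth (enum b) l) => [c|] /=; first by rewrite mxE.
by rewrite big1 // => r _; rewrite mulr0.
Qed.

Lemma G1 v i j : (if Gamma1 v i j then mu v i j else 0) = mu_eff v i j.
Proof.
rewrite /Defs.Gamma1 /Defs.mu_eff.
case: (F i == src v); case: (F j == tgt v) => //=.
by case: eqP.
Qed.

Lemma evalW_mat (W : pairT d -> C) v t s :
  (forall p, ~~ rel2 p -> W p = 0) -> (forall i j, j \notin beta -> W (i, j) = 0) ->
  evalW W (v, t, s) =
  \sum_(l < e) (\sum_i W (i, s) * mu_eff v i (enum_val l)) * W (t, enum_val l)
  - \sum_i W (i, s) * mu_eff v i t.
Proof.
move=> Hz Hb; rewrite evalW_explicit; congr (_ - _); last first.
  apply: eq_bigr => s' _; rewrite -G1.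
  case: (boolP (rel2 (s', s))) => Hr; last by rewrite andbF Hz // mul0r.
  by rewrite andbT; case: (Gamma1 v s' t); rewrite ?mulr0 // mulrC.
have E1 : forall s' t',
  (if [&& Gamma1 v s' t', rel2 (t, t') & rel2 (s', s)]
   then mu v s' t' * (W (t, t') * W (s', s)) else 0) =
  W (s', s) * mu_eff v s' t' * W (t, t').
  move=> s' t'; rewrite -G1.
  case: (boolP (rel2 (t, t'))) => H1; last by rewrite andbF (Hz _ H1) mulr0.
  case: (boolP (rel2 (s', s))) => H2; last by rewrite !andbF (Hz _ H2) mul0r mul0r.
  rewrite ?andbT; case: (Gamma1 v s' t'); last by rewrite mulr0 mul0r.
  by ring.
under eq_bigr do under eq_bigr do rewrite E1.
rewrite exchange_big /=.
under eq_bigr do rewrite -mulr_suml.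
rewrite (bigID (fun t' => t' \in beta)) /= [X in _ + X]big1 ?addr0; last first.
  by move=> t' Ht; rewrite Hb // mulr0.
by rewrite big_enum_val.
Qed.


Local Notation actM := (Defs.actM src tgt F mu).

Definition normalized (Y : 'M[C]_(e, d)) := forall k (l : 'I_e), Y k (enum_val l) = (k == l)%:R.

Lemma mulproj (m : nat) (Y : 'M[C]_(m, d)) p k c :
  (Y *m projM C F p) k c = Y k c * (F c == p)%:R.
Proof.
rewrite mxE (bigD1 c) //= big1 ?addr0; first by rewrite mxE eqxx.
by move=> i /negbTE Hi; rewrite mxE Hi mulr0.
Qed.

Lemma mulact (m : nat) (Y : 'M[C]_(m, d)) v k t :
  (Y *m actM v) k t = \sum_i Y k i * mu_eff v i t.
Proof. by rewrite mxE; apply: eq_bigr => i _; rewrite mxE. Qed.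

Lemma mat_proj W p : (forall q, ~~ rel2 q -> W q = 0) ->
  (mat W *m projM C F p <= mat W)%MS.
Proof.
move=> Hz; apply/submxP.
exists (\matrix_(k, l) ((k == l) && (F (enum_val k) == p))%:R).
apply/matrixP => k c; rewrite mulproj [RHS]mxE (bigD1 k) //= big1 ?addr0; last first.
  by move=> l /negbTE Hl; rewrite mxE eq_sym Hl mul0r.
rewrite !mxE eqxx /=.
case: (boolP (rel2 (c, enum_val k))) => Hr; last by rewrite Hz // !mul0r mulr0.
by case/andP: Hr => /eqP ->; rewrite mulrC.
Qed.

Lemma mat_act W v :
  (forall q, ~~ rel2 q -> W q = 0) -> (forall i j, j \notin beta -> W (i, j) = 0) ->
  (forall t (k : 'I_e), evalW W (v, t, enum_val k) = 0) ->
  (mat W *m actM v <= mat W)%MS.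
Proof.
move=> Hz Hb He; apply/submxP.
exists (\matrix_(k, l) (mat W *m actM v) k (enum_val l)).
apply/matrixP => k t; rewrite mulact mxE.
have := He t k; rewrite (evalW_mat _ _ _ Hz Hb) => /eqP; rewrite subr_eq0 => /eqP E.
rewrite [RHS](_ : _ = \sum_(l < e)
  (\sum_i W (i, enum_val k) * mu_eff v i (enum_val l)) * W (t, enum_val l)).
  by rewrite E; apply: eq_bigr => i _; rewrite mxE.
apply: eq_bigr => l _; rewrite !mxE; congr (_ * _).
by apply: eq_bigr => i _; rewrite !mxE.
Qed.

Lemma norm_mul (D : 'M[C]_e) (Y : 'M[C]_(e, d)) k (l : 'I_e) :
  normalized Y -> (D *m Y) k (enum_val l) = D k l.
Proof.
move=> HY; rewrite mxE (bigD1 l) //= HY eqxx mulr1 big1 ?addr0 //.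
by move=> r /negbTE Hr; rewrite HY Hr mulr0.
Qed.

Lemma act_mat (Y : 'M[C]_(e, d)) W v t (k : 'I_e) :
  normalized Y -> (Y *m actM v <= Y)%MS ->
  (forall q, ~~ rel2 q -> W q = 0) -> (forall i j, j \notin beta -> W (i, j) = 0) ->
  (forall (k : 'I_e) i, W (i, enum_val k) = Y k i) ->
  evalW W (v, t, enum_val k) = 0.
Proof.
move=> HY /submxP [D HD] Hz Hb HW.
rewrite (evalW_mat _ _ _ Hz Hb); apply/eqP; rewrite subr_eq0; apply/eqP.
have HDkl : forall l, D k l = \sum_i W (i, enum_val k) * mu_eff v i (enum_val l).
  move=> l; rewrite -(@norm_mul D Y k l HY) -HD mulact.
  by apply: eq_bigr => i _; rewrite HW.
have : (Y *m actM v) k t = (D *m Y) k t by rewrite HD.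
rewrite mulact mxE => E.
rewrite (_ : \sum_i W (i, enum_val k) * mu_eff v i t = \sum_i Y k i * mu_eff v i t);
  last by apply: eq_bigr => i _; rewrite HW.
rewrite E; apply: eq_bigr => l _; by rewrite HDkl HW.
Qed.

Lemma proj_zero (Y : 'M[C]_(e, d)) (k : 'I_e) i :
  normalized Y -> (Y *m projM C F (F i) <= Y)%MS -> F i != F (enum_val k) -> Y k i = 0.
Proof.
move=> HY /submxP [D HD] Hne.
have HDkl : forall l : 'I_e, D k l = (k == l)%:R * (F (enum_val l) == F i)%:R.
  by move=> l; rewrite -(@norm_mul D Y k l HY) -HD mulproj HY.
have : (Y *m projM C F (F i)) k i = (D *m Y) k i by rewrite HD.
rewrite mulproj eqxx mulr1 mxE => ->.
rewrite (bigD1 k) //= big1 ?addr0.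
  by rewrite HDkl eqxx eq_sym (negbTE Hne) mulr0 mul0r.
by move=> l /negbTE Hl; rewrite HDkl eq_sym Hl !mul0r.
Qed.

End Mat.


End P1.
Import P1.

Module P2.
Local Open Scope ring_scope.
Section Comb.
Variable d : nat.

Definition sq (b : {set 'I_d}) : seq nat := map val (enum b).

Lemma sq_sorted (b : {set 'I_d}) : sorted ltn (sq b).
Proof.
rewrite /sq sorted_map /enum_mem; apply: sorted_filter.
  by move=> x y z /= ; apply: ltn_trans.
by rewrite -sorted_map -enumT val_enum_ord iota_ltn_sorted.
Qed.

Lemma size_sq (b : {set 'I_d}) : size (sq b) = #|b|.
Proof. by rewrite size_map cardE. Qed.

Lemma bnth_sq (b : {set 'I_d}) l : bnth b l = nth 0%N (sq b) l.
Proof. by []. Qed.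

Lemma sq_enum_val (b : {set 'I_d}) (l : 'I_#|b|) : nth 0%N (sq b) l = enum_val l.
Proof. by rewrite /sq (nth_map (enum_default l)) // -cardE. Qed.

Lemma sq_inj (b1 b2 : {set 'I_d}) : sq b1 = sq b2 -> b1 = b2.
Proof.
move/(inj_map val_inj) => E; apply/setP => x.
by rewrite -mem_enum E mem_enum.
Qed.

Lemma count_sorted_lt (s : seq nat) l : sorted ltn s -> (l < size s)%N ->
  count (fun x => x < nth 0 s l)%N s = l.
Proof.
elim: s l => [|x s IH] l //= Hs Hl.
have Hall : all (ltn x) s := order_path_min ltn_trans Hs.
have Hs' : sorted ltn s := path_sorted Hs.
case: l Hl => [|l] Hl /=.
  rewrite ltnn add0n; apply/eqP; rewrite -leqn0 leqNgt -has_count.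
  apply/negP => /hasP [y Hy /= Hyx].
  by move/allP: Hall => /(_ y Hy) /= Hxy; move: (ltn_trans Hxy Hyx); rewrite ltnn.
have Hn : (x < nth 0 s l)%N by move/allP: Hall; apply; apply: mem_nth.
by rewrite Hn IH.
Qed.

Lemma count_sorted_le (s : seq nat) l : sorted ltn s -> (l < size s)%N ->
  count (fun x => x <= nth 0 s l)%N s = l.+1.
Proof.
elim: s l => [|x s IH] l //= Hs Hl.
have Hall : all (ltn x) s := order_path_min ltn_trans Hs.
have Hs' : sorted ltn s := path_sorted Hs.
case: l Hl => [|l] Hl /=.
  rewrite leqnn add1n; congr (_.+1); apply/eqP; rewrite -leqn0 leqNgt -has_count.
  apply/negP => /hasP [y Hy /= Hyx].
  by move/allP: Hall => /(_ y Hy) /= Hxy; move: (leq_trans Hxy Hyx); rewrite ltnn.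
have Hn : (x < nth 0 s l)%N by move/allP: Hall; apply; apply: mem_nth.
by rewrite (ltnW Hn) IH.
Qed.

Lemma count_card (b : {set 'I_d}) (P : pred nat) :
  count P (sq b) = #|[set x in b | P (val x)]|.
Proof.
rewrite /sq count_map cardsE cardE /enum_mem count_filter size_filter.
by apply: eq_count => x; rewrite /= andbC.
Qed.

Lemma ble_count (b1 b2 : {set 'I_d}) : #|b1| = #|b2| ->
  (forall c : nat, count (fun y => y <= c) (sq b2) <= count (fun y => y <= c) (sq b1))%N ->
  forall l, (l < #|b1|)%N -> (bnth b1 l <= bnth b2 l)%N.
Proof.
move=> Hc H l Hl; rewrite !bnth_sq leqNgt; apply/negP => Hlt.
have := H (nth 0 (sq b2) l).
rewrite count_sorted_le ?sq_sorted ?size_sq -?Hc //.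
have : (count (fun x => x <= nth 0 (sq b2) l) (sq b1) <=
        count (fun x => x < nth 0 (sq b1) l) (sq b1))%N.
  by apply: sub_count => x /= Hx; apply: leq_ltn_trans Hx Hlt.
rewrite count_sorted_lt ?sq_sorted ?size_sq // => H1 H2.
by move: (leq_trans H2 H1); rewrite ltnn.
Qed.

Lemma ble_swap (beta : {set 'I_d}) (i j : 'I_d) :
  j \in beta -> i \notin beta -> (j < i)%N ->
  ble beta (i |: (beta :\ j)).
Proof.
move=> Hj Hi Hji.
have Hc : #|beta| = #|i |: (beta :\ j)|.
  by rewrite cardsU1 !inE (negbTE Hi) andbF add1n (cardsD1 j beta) Hj.
rewrite /ble Hc eqxx /=; apply/forallP => l.
apply: ble_count; rewrite ?Hc //.
move=> c; rewrite !count_card; case: (leqP i c) => Hic.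
  have Hjc : (j <= c)%N by apply: leq_trans (ltnW Hji) Hic.
  have -> : [set x in i |: (beta :\ j) | (val x <= c)%N] =
            i |: ([set x in beta | (val x <= c)%N] :\ j).
    apply/setP => x; rewrite !inE.
    by case: eqP => [->|_] /=; [rewrite Hic | rewrite andbA].
  rewrite cardsU1 !inE (negbTE Hi) andbF add1n.
  by rewrite [X in (_ <= X)%N](cardsD1 j) !inE Hj Hjc.
apply: subset_leq_card; apply/subsetP => x; rewrite !inE.
case: eqP => [->|_] /=; first by rewrite leqNgt Hic.
by case/andP => /andP [_ ->] ->.
Qed.

End Comb.

End P2.
Import P2.

Module P3.
Local Open Scope ring_scope.

Lemma card_ltset n m : (m <= n)%N -> #|[set k : 'I_n | (k < m)%N]| = m.
Proof.
move=> Hm.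
have -> : [set k : 'I_n | (k < m)%N] = [set widen_ord Hm x | x : 'I_m].
  apply/setP => k; rewrite inE; apply/idP/imsetP.
    by move=> Hk; exists (Ordinal Hk) => //; apply: val_inj.
  by case=> x _ ->; rewrite /= ltn_ord.
rewrite card_imset ?card_ord //.
by move=> x y /(congr1 val) /= /val_inj.
Qed.

Lemma pigeon n (s : 'S_n) (l0 : 'I_n) : exists k : 'I_n, (k <= l0)%N && (l0 <= s k)%N.
Proof.
case: (pickP (fun k : 'I_n => (k <= l0)%N && (l0 <= s k)%N)) => [k Hk|H].
  by exists k.
exfalso.
have Hs : s @: [set k : 'I_n | (k < l0.+1)%N] \subset [set k : 'I_n | (k < l0)%N].
  apply/subsetP => y /imsetP [k]; rewrite !inE ltnS => Hk ->.
  by move: (H k); rewrite Hk /= => /negbT; rewrite -ltnNge.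
move: (subset_leq_card Hs); rewrite card_imset; last exact: perm_inj.
by rewrite !card_ltset ?ltnn // ltnW.
Qed.

Lemma sq_mono d (b : {set 'I_d}) i j : (i <= j)%N -> (j < #|b|)%N ->
  (nth 0 (sq b) i <= nth 0 (sq b) j)%N.
Proof.
rewrite leq_eqVlt => /orP [/eqP -> //|Hij] Hj.
apply: ltnW; apply: (sorted_ltn_nth ltn_trans 0 (sq_sorted b)) => //;
  rewrite inE size_sq //; exact: ltn_trans Hij Hj.
Qed.

Section Plk.
Variables (C : fieldType) (d : nat) (beta : {set 'I_d}).
Local Notation e := #|beta|.

Lemma Pl_norm (Y : 'M[C]_(e, d)) : normalized Y -> Pl Y beta = 1.
Proof.
move=> HY; rewrite -(det1 C e) /Pl; congr (\det _); apply/matrixP => k l.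
by rewrite !mxE onth_enum_val /= HY.
Qed.

Lemma Pl_zero (Y : 'M[C]_(e, d)) b' :
  (forall (k : 'I_e) (i : 'I_d), (enum_val k < i)%N -> Y k i = 0) ->
  blt beta b' -> Pl Y b' = 0.
Proof.
move=> HY /andP [/andP [/eqP Hc /forallP Hle] Hne].
have [l0 Hl0] : exists l0 : 'I_e, (bnth beta l0 < bnth b' l0)%N.
  case: (pickP (fun l0 : 'I_e => (bnth beta l0 < bnth b' l0)%N)) => [l H|H].
    by exists l.
  exfalso; move/negP: Hne; apply; apply/eqP; apply: sq_inj.
  apply: (@eq_from_nth _ 0%N); rewrite !size_sq // => l Hl.
  have := H (Ordinal Hl); have := Hle (Ordinal Hl); rewrite /= !bnth_sq.
  by move=> H1 /negbT; rewrite -leqNgt => H2; apply/eqP; rewrite eqn_leq H1 H2.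
rewrite /Pl /determinant big1 // => s _.
case: (pigeon s l0) => k /andP [Hk1 Hk2].
rewrite (bigD1 k) //= mxE.
case E: (onth (enum b') (s k)) => [c|] /=; last by rewrite mul0r mulr0.
rewrite HY ?mul0r ?mulr0 //.
have Hsz : (s k < size (enum b'))%N.
  by move: E; rewrite -cardE -Hc; case: (s k).
have Hcv : val c = nth 0%N (sq b') (s k).
  by rewrite /sq (nth_map c) // (@onth_nth _ c c _ _ E).
rewrite Hcv -(sq_enum_val k).
apply: (leq_ltn_trans (sq_mono Hk1 (ltn_ord l0))).
apply: (leq_trans Hl0); rewrite bnth_sq.
by apply: sq_mono => //; rewrite -Hc ltn_ord.
Qed.

End Plk.

End P3.
Import P3.

Module P4.
Local Open Scope ring_scope.

Section Cramer.
Variables (C : fieldType) (d : nat) (beta : {set 'I_d}) (i j : 'I_d).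
Hypotheses (Hj : j \in beta) (Hi : i \notin beta).
Local Notation e := #|beta|.

Definition bs := i |: (beta :\ j).

Lemma card_bs : #|bs| = e.
Proof. by rewrite cardsU1 !inE (negbTE Hi) andbF add1n (cardsD1 j beta) Hj. Qed.

Lemma i_bs : i \in bs.
Proof. by rewrite !inE eqxx. Qed.

Lemma size_bs : size (enum bs) = e.
Proof. by rewrite -cardE card_bs. Qed.

Lemma idx_lt : (index i (enum bs) < e)%N.
Proof. by rewrite -size_bs index_mem mem_enum i_bs. Qed.

Definition l0 : 'I_e := Ordinal idx_lt.

Definition cl (l : 'I_e) : 'I_d := nth i (enum bs) l.

Lemma onth_cl (l : 'I_e) : onth (enum bs) l = Some (cl l).
Proof. by rewrite onthE (nth_map i) // size_bs. Qed.

Lemma cl_l0 : cl l0 = i.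
Proof. by rewrite /cl /= nth_index // mem_enum i_bs. Qed.

Lemma cl_beta (l : 'I_e) : l != l0 -> (cl l \in beta) && (cl l != j).
Proof.
move=> Hl.
have Hin : cl l \in bs by rewrite -mem_enum /cl mem_nth // size_bs.
have Hne : cl l != i.
  apply/eqP => E; case/eqP: Hl; apply: val_inj => /=.
  by rewrite -E /cl index_uniq ?enum_uniq // size_bs.
by move: Hin; rewrite !inE (negbTE Hne) /= andbC.
Qed.

Definition kj : 'I_e := enum_rank_in Hj j.

Definition g (l : 'I_e) : 'I_e := if l == l0 then kj else enum_rank_in Hj (cl l).

Definition Msub (Y : 'M[C]_(e, d)) : 'M[C]_e :=
  \matrix_(k, l) oapp (Y k) 0 (onth (enum bs) l).

Lemma Pl_Msub (Y : 'M[C]_(e, d)) : Pl Y bs = \det (Msub Y).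
Proof. by []. Qed.

Lemma Msub_E' (Y : 'M[C]_(e, d)) (k l : 'I_e) : normalized Y ->
  oapp (Y k) 0 (onth (enum bs) l) = if l == l0 then Y k i else (k == g l)%:R.
Proof.
move=> HY; rewrite onth_cl /=.
case: eqP => [->|/eqP Hl]; first by rewrite cl_l0.
rewrite /g (negbTE Hl); case/andP: (cl_beta Hl) => Hb _.
by rewrite -{1}(enum_rankK_in Hj Hb) HY.
Qed.

Definition Er (r : 'I_e) : 'M[C]_(e, d) :=
  \matrix_(k, c) ((c == enum_val k) || ((k == r) && (c == i)))%:R.

Lemma enum_val_ne_i (k : 'I_e) : (enum_val k == i) = false.
Proof.
apply/negbTE; apply/eqP => E; move: (enum_valP k); rewrite E.
by move/negP: Hi.
Qed.

Lemma Er_norm (r : 'I_e) : normalized (Er r).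
Proof.
move=> k l; rewrite mxE enum_val_ne_i andbF orbF.
by rewrite eq_sym (inj_eq enum_val_inj).
Qed.

Lemma Er_i (r k : 'I_e) : Er r k i = (k == r)%:R.
Proof. by rewrite mxE eq_sym enum_val_ne_i eqxx andbT. Qed.

Definition cof (r : 'I_e) := cofactor (Msub (Er kj)) r l0.

Lemma cof_indep (Y : 'M[C]_(e, d)) (r : 'I_e) : normalized Y -> cofactor (Msub Y) r l0 = cof r.
Proof.
move=> HY; rewrite /cof /cofactor; congr (_ * \det _); apply/matrixP => a b.
rewrite !mxE Msub_E' // Msub_E'; last exact: Er_norm.
by rewrite eq_sym (negbTE (neq_lift _ _)) //; apply: Er_norm.
Qed.

Lemma det_expand (Y : 'M[C]_(e, d)) : normalized Y -> \det (Msub Y) = \sum_r Y r i * cof r.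
Proof.
move=> HY; rewrite (expand_det_col _ l0); apply: eq_bigr => r _.
by rewrite cof_indep // mxE onth_cl cl_l0.
Qed.

Lemma cof_zero (r : 'I_e) : r != kj -> cof r = 0.
Proof.
move=> Hr.
have E : \det (Msub (Er r)) = cof r.
  rewrite det_expand; last exact: Er_norm.
  rewrite (bigD1 r) //= Er_i eqxx mul1r big1 ?addr0 //.
  by move=> r' Hr'; rewrite Er_i (negbTE Hr') mul0r.
rewrite -E.
have Hv : enum_val r \in bs.
  rewrite !inE (enum_valP r) andbT orbC; apply/orP; left.
  apply/eqP => Ev; case/eqP: Hr; apply: enum_val_inj.
  by rewrite /kj (enum_rankK_in Hj Hj) Ev.
have Hl1 : (index (enum_val r) (enum bs) < e)%N.
  by rewrite -size_bs index_mem mem_enum.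
pose l1 : 'I_e := Ordinal Hl1.
have Hcl1 : cl l1 = enum_val r by rewrite /cl /= nth_index // mem_enum.
have Hne : l0 != l1.
  apply/eqP => El; move: Hcl1; rewrite -El cl_l0 => /eqP.
  by rewrite eq_sym enum_val_ne_i.
rewrite -det_tr; apply: (determinant_alternate Hne) => k.
rewrite !mxE !onth_cl /= cl_l0 Hcl1 Er_i mxE enum_val_ne_i andbF orbF.
by rewrite eq_sym (inj_eq enum_val_inj).
Qed.

Lemma cramer (Y : 'M[C]_(e, d)) : normalized Y -> Pl Y bs = cof kj * Y kj i.
Proof.
move=> HY; rewrite Pl_Msub det_expand // (bigD1 kj) //= big1 ?addr0; first by rewrite mulrC.
by move=> r Hr; rewrite cof_zero // mulr0.
Qed.

Lemma g_inj : injective g.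
Proof.
have Hkj : enum_val kj = j by rewrite /kj enum_rankK_in.
move=> l l'; rewrite /g.
case: eqP => [->|/eqP Hl]; case: eqP => [->|/eqP Hl'] // .
- move/(congr1 enum_val); case/andP: (cl_beta Hl') => Hb Hn.
  by rewrite Hkj enum_rankK_in // => E; move: Hn; rewrite -E eqxx.
- move/(congr1 enum_val); case/andP: (cl_beta Hl) => Hb Hn.
  by rewrite Hkj enum_rankK_in // => E; move: Hn; rewrite E eqxx.
- move/(congr1 enum_val); case/andP: (cl_beta Hl) => Hb _.
  case/andP: (cl_beta Hl') => Hb' _.
  rewrite !enum_rankK_in // => /eqP; rewrite /cl nth_uniq ?enum_uniq ?size_bs //.
  by move/eqP/val_inj.
Qed.

Lemma Mg (k l : 'I_e) : Msub (Er kj) k l = (k == g l)%:R.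
Proof.
rewrite mxE Msub_E'; last exact: Er_norm.
case: eqP => [->|//].
by rewrite Er_i /g eqxx.
Qed.

Lemma cof_nz : cof kj != 0.
Proof.
have E : \det (Msub (Er kj)) = cof kj.
  by rewrite -Pl_Msub cramer ?Er_i ?eqxx ?mulr1 //; apply: Er_norm.
rewrite -E; set M := Msub (Er kj).
have H1 : M^T *m M = 1%:M.
  apply/matrixP => l l'; rewrite !mxE.
  rewrite (bigD1 (g l)) //= big1 ?addr0.
    by rewrite mxE /M !Mg eqxx mul1r (inj_eq g_inj).
  by move=> k Hk; rewrite mxE /M !Mg (negbTE Hk) mul0r.
apply/eqP => H0.
have := congr1 determinant H1; rewrite det_mulmx det1 H0 mulr0 => /eqP.
by rewrite eq_sym oner_eq0.
Qed.

End Cramer.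

End P4.
Import P4.

Module P5.
Local Open Scope ring_scope.

Section Readout.
Variables (C : fieldType) (d : nat) (beta : {set 'I_d}).
Local Notation e := #|beta|.

Definition Ek (i j : 'I_d) : 'M[C]_(e, d) :=
  \matrix_(r, c) ((c == enum_val r) || ((enum_val r == j) && (c == i)))%:R.

Lemma Ek_Er i j (Hj : j \in beta) : Ek i j = Er C i (kj Hj).
Proof.
apply/matrixP => r c; rewrite !mxE; congr (_ || (_ && _))%:R.
apply/eqP/eqP => [E|->]; last by rewrite /kj enum_rankK_in.
by apply: enum_val_inj; rewrite /kj enum_rankK_in.
Qed.

Lemma readout (Y : 'M[C]_(e, d)) i j (Hj : j \in beta) (Hi : i \notin beta) :
  normalized Y ->
  Pl (Ek i j) (bs beta i j) != 0 /\
  Pl Y (bs beta i j) / Pl (Ek i j) (bs beta i j) = Y (enum_rank_in Hj j) i.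
Proof.
move=> HY.
have HE : Pl (Ek i j) (bs beta i j) = cof C Hj Hi (kj Hj).
  rewrite Ek_Er (cramer Hj Hi); last exact: Er_norm.
  by rewrite Er_i // eqxx mulr1.
rewrite HE (cramer Hj Hi HY); split; first exact: cof_nz.
by rewrite [_ * Y _ _]mulrC mulfK // cof_nz.
Qed.

Lemma card_bs' i j : j \in beta -> i \notin beta -> #|bs beta i j| = e.
Proof.
by move=> Hj Hi; rewrite cardsU1 !inE (negbTE Hi) andbF add1n (cardsD1 j beta) Hj.
Qed.

Lemma pick_ev (k : 'I_e) : [pick k' : 'I_e | enum_val k' == enum_val k] = Some k.
Proof.
case: pickP => [k' /eqP /enum_val_inj -> //|H].
by move: (H k); rewrite eqxx.
Qed.

Lemma pick_none (j : 'I_d) : j \notin beta -> [pick k' : 'I_e | enum_val k' == j] = None.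
Proof.
move=> Hj; case: pickP => // k' /eqP E; move: (enum_valP k'); rewrite E.
by move/negP: Hj.
Qed.

End Readout.

Section Final.
Variables (C : fieldType) (Q0 Q1 : finType) (src tgt : Q1 -> Q0).
Variables (d : nat) (F : 'I_d -> Q0) (mu : Q1 -> 'I_d -> 'I_d -> C).
Variables (beta : {set 'I_d}) (ev : pevT C d) (out : tripleT Q1 d -> pairT d -> bool).
Hypothesis Hev : is_ev_beta src tgt F mu beta ev.
Hypothesis Hsol : is_solution src tgt F mu ev out.
Local Notation e := #|beta|.
Local Notation rel2 := (Defs.rel2 F).
Local Notation rel3 := (Defs.rel3 src tgt F mu).
Local Notation goodW := (good src tgt F mu ev).
Local Notation FAs := (FA src tgt F mu ev out).
Local Notation evalW := (evalW src tgt F mu).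
Local Notation cellM := (@cellM C Q0 Q1 src tgt d F mu beta).

Lemma Hpe : partial_eval src tgt F mu ev.
Proof. by case: Hev. Qed.

Lemma Hext : extends (f_beta C F beta) ev.
Proof. by case: Hev. Qed.

Lemma good_in W i j : goodW W -> i \in beta -> W (i, j) = (i == j)%:R.
Proof.
case=> Hz Hd _ Hi; case: (boolP (rel2 (i, j))) => Hr.
  have Ef : f_beta C F beta (i, j) = Some (if i == j then 1 else 0).
    by rewrite /f_beta Hr /= Hi.
  have Eev : ev (i, j) = f_beta C F beta (i, j) by apply: Hext; rewrite Ef.
  by rewrite Ef in Eev; rewrite (Hd _ _ Eev); case: (i == j).
rewrite Hz //; case: eqP => // E; move: Hr; by rewrite E /Defs.rel2 /= eqxx leqnn.
Qed.

Lemma good_out W i j : goodW W -> j \notin beta -> W (i, j) = 0.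
Proof.
case=> Hz Hd _ Hj; case: (boolP (rel2 (i, j))) => Hr; last by rewrite Hz.
have Ef : f_beta C F beta (i, j) = Some 0.
  rewrite /f_beta Hr /=; case: ifP => Hi; last by rewrite Hj.
  by case: eqP => // E; move: Hj; rewrite -E Hi.
have Eev : ev (i, j) = f_beta C F beta (i, j) by apply: Hext; rewrite Ef.
by rewrite Ef in Eev; apply: Hd Eev.
Qed.

Lemma good_norm W : goodW W -> normalized (mat beta W).
Proof.
move=> Hg k l; rewrite mxE good_in ?enum_valP //.
by rewrite eq_sym (inj_eq enum_val_inj).
Qed.

Lemma good_tri W : goodW W ->
  forall (k : 'I_e) (i : 'I_d), (enum_val k < i)%N -> mat beta W k i = 0.
Proof.
case=> Hz _ _ k i H; rewrite mxE Hz // /Defs.rel2 /= negb_and; apply/orP; right.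
by rewrite -ltnNge.
Qed.

Lemma evalW_nonrel3 W tau : ~~ rel3 tau -> evalW W tau = 0.
Proof. by move=> H; rewrite /P1.evalW big1 // => m _; rewrite coefE_nonrel3 // mul0r. Qed.

Lemma good_cell W : goodW W -> cellM (mat beta W).
Proof.
move=> Hg; have HN := good_norm Hg; split.
- by rewrite Pl_norm // oner_eq0.
- by move=> b' Hb; apply: Pl_zero => //; apply: good_tri.
case: Hg => Hz Hd He; split => [p|v]; first exact: mat_proj.
apply: mat_act => //; first by move=> i j; apply: good_out.
move=> t k; case: (boolP (rel3 (v, t, enum_val k))) => H3; first exact: He.
exact: evalW_nonrel3.
Qed.


Lemma cell_norm (X : 'M[C]_(e, d)) : cellM X ->
  exists Y : 'M[C]_(e, d),
    [/\ normalized Y, cellM Y, (Y == X)%MS & forall b, ratios Y b = ratios X b].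
Proof.
case=> HPl Hblt [Hp Ha].
pose Xb : 'M[C]_e := \matrix_(k, l) X k (enum_val l).
have HXb : Pl X beta = \det Xb.
  by rewrite /Pl; congr (\det _); apply/matrixP => k l; rewrite !mxE onth_enum_val.
have Hu : Xb \in unitmx by rewrite unitmxE unitfE -HXb.
have Hdi : \det (invmx Xb) != 0 by rewrite det_inv invr_eq0 -HXb.
pose Y := invmx Xb *m X.
have HYb : forall (A : 'M[C]_e) k (l : 'I_e), (A *m X) k (enum_val l) = (A *m Xb) k l.
  by move=> A k l; rewrite !mxE; apply: eq_bigr => r _; rewrite mxE.
have HN : normalized Y by move=> k l; rewrite /Y HYb mulVmx // mxE.
have HPY : forall b, Pl Y b = \det (invmx Xb) * Pl X b by move=> b; rewrite /Y PlM.
have HYX : (Y <= X)%MS by apply: submxMl.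
have HXY : (X <= Y)%MS.
  have -> : X = Xb *m Y by rewrite /Y mulmxA mulmxV // mul1mx.
  exact: submxMl.
exists Y; split => //.
- split.
  + by rewrite HPY mulf_neq0.
  + by move=> b' Hb'; rewrite HPY Hblt // mulr0.
  + split => [p|v].
      rewrite /Y -mulmxA; apply: submx_trans (submxMl _ _) _.
      exact: submx_trans (Hp p) HXY.
    rewrite /Y -mulmxA; apply: submx_trans (submxMl _ _) _.
    exact: submx_trans (Ha v) HXY.
- by rewrite HYX HXY.
- move=> b; rewrite /ratios; case: ifP => // _; rewrite !HPY.
  by rewrite invfM mulrACA mulfV // mul1r.
Qed.

Lemma norm_good (Y : 'M[C]_(e, d)) : normalized Y -> cellM Y ->
  exists W, goodW W /\ forall (k : 'I_e) i, W (i, enum_val k) = Y k i.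
Proof.
move=> HY [HPl Hblt [Hp Ha]].
pose W (p : pairT d) := oapp (fun k => Y k p.1) 0 [pick k : 'I_e | enum_val k == p.2].
have WE : forall (k : 'I_e) i, W (i, enum_val k) = Y k i.
  by move=> k i; rewrite /W /= pick_ev.
have W0 : forall i j, j \notin beta -> W (i, j) = 0.
  by move=> i j Hj; rewrite /W /= pick_none.
have Z1 : forall (k : 'I_e) i, F i != F (enum_val k) -> Y k i = 0.
  by move=> k i H; apply: proj_zero.
have Z2 : forall (k : 'I_e) (i : 'I_d), (enum_val k < i)%N -> Y k i = 0.
  move=> k i H; case: (boolP (i \in beta)) => Hib.
    rewrite -(enum_rankK_in Hib Hib) HY; case: eqP => // Ek.
    by move: H; rewrite Ek (enum_rankK_in Hib Hib) ltnn.
  have Hj := enum_valP k.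
  case: (readout Hj Hib HY) => _.
  rewrite enum_valK_in Hblt ?mul0r //.
  rewrite /blt /bs ble_swap //=; apply/eqP => E.
  by move: Hib; rewrite E !inE eqxx.
have Hz : forall p, ~~ rel2 p -> W p = 0.
  case=> i j Hr; case: (boolP (j \in beta)) => Hjb; last exact: W0.
  rewrite -(enum_rankK_in Hjb Hjb) WE.
  move: Hr; rewrite /Defs.rel2 /= negb_and => /orP [H|H].
    by apply: Z1; rewrite (enum_rankK_in Hjb Hjb).
  by apply: Z2; rewrite (enum_rankK_in Hjb Hjb) ltnNge.
have HE : forall tau, evalW W tau = 0.
  case=> [[v t] s]; case: (boolP (s \in beta)) => Hs.
    rewrite -(enum_rankK_in Hs Hs); apply: (act_mat t _ HY (Ha v) Hz W0 WE).
  rewrite (evalW_mat _ _ _ _ _ _ Hz W0).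
  rewrite [X in X - _]big1 => [|l _]; last first.
    by rewrite big1 ?mul0r // => i _; rewrite W0 // mul0r.
  by rewrite big1 ?subr0 // => i _; rewrite W0 // mul0r.
pose ev' (p : pairT d) := if rel2 p then Some (W p) else None.
have Hpe' : partial_eval src tgt F mu ev'.
  split; first by move=> p; rewrite /ev'; case: (rel2 p).
  move=> tau p H3 He _; split.
    by rewrite /ev'; case/and3P: He => _ -> _.
  rewrite -(HE tau) /evalE /P1.evalW; apply: eq_bigr => m _; congr (_ * _).
  apply: eq_bigr => q _; rewrite /ev'; case: (boolP (rel2 q)) => Hq //=.
  by rewrite Hz.
have Hext' : extends (f_beta C F beta) ev'.
  move=> [i j]; rewrite /f_beta /ev' /=.
  case: (boolP (rel2 (i, j))) => Hr //=.
  case: (boolP (i \in beta)) => Hib.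
    move=> _; congr Some; case: (boolP (j \in beta)) => Hjb.
      rewrite -{1}(enum_rankK_in Hjb Hjb) WE -[i in Y _ i](enum_rankK_in Hib Hib) HY.
      rewrite -(inj_eq enum_val_inj) !enum_rankK_in // eq_sym.
      by case: (i == j).
    rewrite W0 //; case: eqP => // E; move: Hjb; rewrite -E Hib.
    by [].
  by case: (boolP (j \in beta)) => Hjb //= _; rewrite W0.
have Hd : forall p c, ev p = Some c -> W p = c.
  move=> p c E; case: Hev => _ _ Hmin.
  have := Hmin ev' Hpe' Hext' p; rewrite E => /(_ isT).
  by rewrite /ev'; case: (rel2 p) => // [[<-]].
by exists W; split => //; split => // tau _.
Qed.


Lemma free_prop p : p \in FAs -> (p.2 \in beta) /\ (p.1 \notin beta).
Proof.
rewrite inE => /andP [/andP [Hr Hu] _].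
have Hf : f_beta C F beta p = None.
  case E: (f_beta C F beta p) => [c|] //.
  have Ee : ev p = f_beta C F beta p by apply: Hext; rewrite E.
  by move: Hu; rewrite Ee E.
move: Hf; rewrite /f_beta Hr /=; case: ifP => // H1; case: ifP => // H2 _.
by split => //; move/negbT: H2; rewrite negbK.
Qed.

Definition psiF (k : 'I_#|FAs|) (r : {set 'I_d} -> C) : C :=
  r (bs beta (enum_val k).1 (enum_val k).2) /
  Pl (Ek C beta (enum_val k).1 (enum_val k).2) (bs beta (enum_val k).1 (enum_val k).2).

Lemma main : affine_of_dim cellM #|FAs|.
Proof.
exists (fun x => mat beta (Wst x)), psiF; split.
- move=> a b; apply: (pf_ext (Wst_poly src tgt F mu ev out (b, enum_val a))).
  by move=> x; rewrite mxE.
- move=> k; apply: (pf_ext (pf_mul (pf_var _ (bs beta (enum_val k).1 (enum_val k).2))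
    (pf_const _ (Pl (Ek C beta (enum_val k).1 (enum_val k).2)
                    (bs beta (enum_val k).1 (enum_val k).2))^-1))).
  by [].
- by move=> x; apply: good_cell; apply: Wst_good; [exact: Hpe | exact: Hsol].
- move=> x k; case: (free_prop (enum_valP k)) => Hj Hi.
  have HN := good_norm (Wst_good Hpe Hsol x).
  rewrite /psiF /ratios card_bs' // eqxx (Pl_norm HN) divr1.
  case: (readout Hj Hi HN) => _ ->.
  by rewrite mxE enum_rankK_in // -surjective_pairing (Wst_free Hsol).
move=> X HX; case: (cell_norm HX) => Y [HN HY HYX Hr].
case: (norm_good HN HY) => W [Hg HW].
set x := fun k => psiF k (ratios X).
have Hx : forall k, W (enum_val k) = x k.
  move=> k; case: (free_prop (enum_valP k)) => Hj Hi.
  rewrite /x /psiF -Hr /ratios card_bs' // eqxx (Pl_norm HN) divr1.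
  case: (readout Hj Hi HN) => _ ->.
  by rewrite -HW enum_rankK_in // -surjective_pairing.
have E := good_Wst Hsol Hg Hx.
have -> : mat beta (Wst x) = Y by apply/matrixP => k i; rewrite mxE -E HW.
exact: HYX.
Qed.

End Final.

Lemma main_gen (C : fieldType) (Q0 Q1 : finType) (src tgt : Q1 -> Q0)
    (d : nat) (F : 'I_d -> Q0) (mu : Q1 -> 'I_d -> 'I_d -> C)
    (beta : {set 'I_d}) (ev : pevT C d) :
  is_ev_beta src tgt F mu beta ev ->
  solvable src tgt F mu ev ->
  affine_of_dim (@cellM _ _ _ src tgt d F mu beta)
    (#|[set p | bpair F ev p]| - #|[set tau | btriple src tgt F mu ev tau]|).
Proof.
move=> Hev [out Hsol]; rewrite -(card_FA Hsol).
exact: main Hev Hsol.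
Qed.

End P5.
Import P5.

Local Open Scope ring_scope.
Local Open Scope complex_scope.

Theorem theorem2p19 (R : realType) (Q0 Q1 : finType) (src tgt : Q1 -> Q0)
    (d : nat) (F : 'I_d -> Q0) (mu : Q1 -> 'I_d -> 'I_d -> R[i])
    (beta : {set 'I_d}) (ev : pevT R[i] d) :
  ~ contradictory src tgt F mu beta ->
  is_ev_beta src tgt F mu beta ev ->
  solvable src tgt F mu ev ->
  affine_of_dim (@cellM _ _ _ src tgt d F mu beta)
    (#|[set p | bpair F ev p]| - #|[set tau | btriple src tgt F mu ev tau]|).
Proof.
move=> _ Hev Hsol; exact: main_gen Hev Hsol.
Qed.
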